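(* Let $a, b, n$ be positive integers with $b>1$, $n>1$ and $\gcd(r_b(n),a)=1$, and for $i = 2,\ldots,n$ set $\alpha_i := a_i + \sum_{j=i}^n (b-1)\, a_j$. Then: (a) $\alpha_i \in \operatorname{Ap}(S_a(b,n))$ for every $i = 2,\ldots,n$; (b) if $a < b^n - 1$ then $\alpha_2 > \alpha_3 > \cdots > \alpha_n$, and if $a > b^n-1$ then $\alpha_2 < \alpha_3 < \cdots < \alpha_n$; (c) for every $\omega \in \operatorname{Ap}(S_a(b,n))$ there exists $i \in \{2,\ldots,n\}$ such that $\omega \le \alpha_i$.
   Context: For $\ell \ge 1$, $r_b(\ell) = \sum_{j=0}^{\ell-1} b^j$, and $r_b(0)=0$. For $i \ge 1$, $a_i := r_b(n) + a\, r_b(i-1)$; $S_a(b,n)$ is the numerical semigroup generated by $\{a_i\}$, with multiplicity $a_1$. $\operatorname{Ap}(S_a(b,n)) = \{\omega \in S_a(b,n) : \omega - a_1 \notin S_a(b,n)\}$. *)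

(* Defs.v *)
From mathcomp Require Import all_boot.
Set Implicit Arguments. Unset Strict Implicit. Unset Printing Implicit Defensive.

Definition rb (b l : nat) : nat := \sum_(j < l) b ^ j.

(* a_i = r_b(n) + a * r_b(i-1), meaningful for i >= 1 *)
Definition agen (a b n i : nat) : nat := rb b n + a * rb b i.-1.

(* membership in S_a(b,n): the submonoid of (nat,+) generated by {a_i : i >= 1},
   i.e. finite sums (with repetition) of generators a_i, i >= 1. *)
Definition inS (a b n x : nat) : Prop :=
  exists s : seq nat, all (fun i => 0 < i) s /\ x = sumn (map (agen a b n) s).

(* Apery set with respect to the multiplicity a_1:
   w in S and w - a_1 (as an integer) not in S. *)
Definition inAp (a b n w : nat) : Prop :=
  inS a b n w /\ ~ (agen a b n 1 <= w /\ inS a b n (w - agen a b n 1)).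

Definition alpha (a b n i : nat) : nat :=
  agen a b n i + \sum_(i <= j < n.+1) (b - 1) * agen a b n j.

(* Main.v *)
Require Import Defs.
From mathcomp Require Import all_boot.
From mathcomp Require Import zify.
Set Implicit Arguments. Unset Strict Implicit. Unset Printing Implicit Defensive.

Lemma rbS b m : rb b m.+1 = rb b m + b ^ m.
Proof. by rewrite /rb big_ord_recr. Qed.

Lemma rb0 b : rb b 0 = 0.
Proof. by rewrite /rb big_ord0. Qed.

Lemma Brb b m : 0 < b -> (b - 1) * rb b m + 1 = b ^ m.
Proof.
move=> b0; elim: m => [|m IH]; first by rewrite rb0 muln0 expn0.
rewrite rbS mulnDr expnS -IH. nia.
Qed.

Lemma rb_add b m k : rb b (m + k) = rb b m + b ^ m * rb b k.
Proof.
elim: k => [|k IH]; first by rewrite addn0 rb0 muln0 addn0.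
rewrite addnS rbS IH rbS expnD; nia.
Qed.

Lemma rbS' b m : rb b m.+1 = 1 + b * rb b m.
Proof. by rewrite -add1n rb_add rbS rb0 expn0 expn1. Qed.

Lemma rb_ge b m : 0 < b -> m <= rb b m.
Proof.
move=> b0; elim: m => [|m IH]; first by rewrite rb0.
rewrite rbS; have: 0 < b ^ m by rewrite expn_gt0 b0. lia.
Qed.

Definition Ts b (s : seq nat) := sumn (map (rb b) s).
Definition Qs b (s : seq nat) := sumn (map (expn b) s).

Lemma QT b s : 0 < b -> (b - 1) * Ts b s + size s = Qs b s.
Proof.
move=> b0; elim: s => [|e s IH] /=; first by rewrite /Ts /Qs /= muln0.
move: IH; rewrite /Ts /Qs /= -(Brb e b0). lia.
Qed.

Lemma agen_sum a b n s :
  sumn (map (agen a b n) s) = size s * rb b n + a * Ts b (map predn s).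
Proof.
elim: s => [|e s IH] /=; first by rewrite /Ts /= muln0.
rewrite IH /agen /Ts /=. lia.
Qed.

Lemma Qs_split b s : Qs b s = count (pred1 0) s + b * Qs b [seq e.-1 | e <- s & e != 0].
Proof.
elim: s => [|e s IH] /=; first by rewrite /Qs /= muln0.
move: IH; rewrite /Qs /=; case: e => [|e] /= IH; rewrite IH ?expn0 ?expnS; timeout 10 lia.
Qed.

Lemma size_split s : size s = count (pred1 0) s + size [seq e.-1 | e <- s & e != 0].
Proof. elim: s => [|e s IH] //=; case: e => [|e] /=; rewrite IH; [by rewrite add1n addSn | by rewrite add0n addnS]. Qed.

Lemma all_split n s : all (fun e => e < n.+1) s -> all (fun e => e < n) [seq e.-1 | e <- s & e != 0].
Proof. elim: s => [|e s IH] //= /andP [He Hs]; case: e He => [|e] /= He; rewrite ?IH // andbT; exact He. Qed.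

Lemma lemL b n : 0 < b -> forall s, all (fun e => e < n) s -> forall K z,
  Qs b s + 1 + z = (K + 1) * b ^ n -> z < b ^ n -> b * K + (b - 1) * n <= size s + z.
Proof.
move=> b0; elim: n => [|n IH] s.
  case: s => [|e s] //= _ K z; rewrite expn0 /Qs /= muln1; timeout 10 lia.
move=> Hall K z H Hz.
have IH' := IH _ (all_split Hall).
set s' := [seq e.-1 | e <- s & e != 0] in IH' *.
move: H; rewrite Qs_split -/s' expnS => H.
rewrite (size_split s) -/s'.
set x0 := count _ s in H *.
set Q' := Qs b s' in H IH' *.
set P := b ^ n in H IH' *.
have P0 : 0 < P by rewrite /P expn_gt0 b0.
have HQ : Q' <= (K + 1) * P.
  have: b * Q' <= b * ((K+1) * P) by timeout 10 lia.
  by rewrite leq_pmul2l.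
set w := (K + 1) * P - Q'.
have Hw : b * w = x0 + 1 + z by rewrite /w mulnBr; timeout 10 lia.
have w1 : 1 <= w by timeout 10 nia.
set m := (w - 1) %/ P. set w0 := (w - 1) %% P.
have Hwm : w - 1 = m * P + w0 by rewrite /m /w0 -divn_eq.
have Hw0 : w0 < P by rewrite /w0 ltn_pmod.
have HmK : m < K + 1.
  have: m * P < (K + 1) * P by timeout 10 lia.
  by rewrite ltn_pmul2r.
have := IH' (K - m) w0.
have -> : K - m + 1 = K + 1 - m by timeout 10 lia.
rewrite mulnBl => /(_ ltac:(timeout 10 lia) Hw0) Hi.
have e1 : w = m * P + w0 + 1 by lia.
have e2 : b * w = b * (m * P) + b * w0 + b by rewrite e1 !mulnDr muln1.
have e3 : b * K = b * (K - m) + b * m by rewrite -mulnDr subnK //; lia.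
have e4 : b * m <= b * (m * P) by rewrite leq_mul2l leq_pmulr // orbT.
have e5 : w0 <= b * w0 by rewrite leq_pmull.
rewrite mulnS. lia.
Qed.
Lemma powbound b n : 0 < b -> 0 < n -> 2 * (b - 1) * (n - 1) < b ^ n.
Proof.
move=> b0; elim: n => [|n IH] // _.
case: n IH => [|n] IH; first by rewrite expn1; lia.
have {IH} IH := IH erefl.
rewrite (expnS b n.+1).
set P := b ^ n.+1 in IH *.
have : 1 < P \/ b = 1.
  have [->|b2] : b = 1 \/ 1 < b by lia. by right.
  left; rewrite /P expnS; have : 0 < b ^ n by rewrite expn_gt0 b0. nia.
case=> [H|->]; last by lia.
have : (b - 1) * 2 <= (b - 1) * P by rewrite leq_mul2l H orbT.
have E : b * P = P + (b - 1) * P by rewrite -{2}(mul1n P) -mulnDl; congr (_ * _); lia.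
rewrite E. lia.
Qed.

Lemma Ts_cat b s1 s2 : Ts b (s1 ++ s2) = Ts b s1 + Ts b s2.
Proof. by rewrite /Ts map_cat sumn_cat. Qed.

Lemma mainA b n j : 1 < b -> j + 2 <= n -> forall s K T0,
  T0 + 1 + j = rb b n -> Ts b s = K * rb b n + T0 -> 1 + (b - 1) * (j + 1) <= size s + K.
Proof.
move=> b1 jn s K T0 HT0.
have b0 : 0 < b by lia.
set r := rb b n in HT0 *.
have r0 : 0 < r by lia.
have Hgen : forall m s K, sumn s < m -> Ts b s = K * r + T0 -> 1 + (b - 1) * (j + 1) <= size s + K.
  elim=> [|m IH] {}s {}K //.
  move=> Hm HT.
  case: (boolP (has (fun e => n <= e) s)) => Hh.
    case/hasP: Hh => e He Hne.
    move: Hm HT; case/splitPr: He => s1 s2.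
    rewrite sumn_cat Ts_cat => Hm HT.
    have Tcons : forall x t, Ts b (x :: t) = rb b x + Ts b t by [].
    have Hre : rb b e = rb b (e - n) + b ^ (e - n) * r.
      by rewrite /r -rb_add subnK.
    set c := b ^ (e - n) in Hre.
    set s' := s1 ++ (e - n) :: s2.
    have HTs' : Ts b s' + c * r = K * r + T0.
      rewrite /s' Ts_cat Tcons; move: HT; rewrite Tcons Hre; lia.
    have HcK : c <= K.
      have : c * r < (K + 1) * r by lia.
      rewrite ltn_pmul2r //; lia.
    have := IH s' (K - c).
    rewrite /s' sumn_cat /= size_cat /= => H.
    have : 1 + (b - 1) * (j + 1) <= size s1 + (size s2).+1 + (K - c).
      apply: H; first by move: Hm => /=; lia.
      have : c * r <= K * r by rewrite leq_mul2r HcK orbT.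
      move: HTs'; rewrite Ts_cat mulnBl; lia.
    rewrite size_cat /=; lia.
  have Hall : all (fun e => e < n) s.
    by apply/allP=> e He; rewrite ltnNge; apply/negP=> Hne; move/hasP: Hh; apply; exists e.
  rewrite leqNgt; apply/negP=> Hlt.
  have HQ := QT s b0.
  have HBr := Brb n b0. rewrite -/r in HBr.
  set N := size s in Hlt HQ *.
  set B := b - 1 in HQ HBr Hlt *.
  have HL := lemL b0 Hall (K := K) (z := K + B * (j + 1) - N).
  have := powbound b0 (ltnW (leq_trans (leq_addl j 2) jn)).
  rewrite -/B => Hpb.
  have HBj : B * (j + 1) <= B * (n - 1) by rewrite leq_mul2l; lia.
  have : b * K + B * n <= N + (K + B * (j + 1) - N).
    apply: HL; last by lia.
    rewrite -HQ HT.
    have E1 : B * (K * r + T0) = K * (B * r) + B * T0 by rewrite mulnDr mulnCA.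
    have E2 : B * T0 + B * (j + 1) + 1 = b ^ n by rewrite -HBr -HT0 -!mulnDr; congr (_ * _ + _); lia.
    rewrite E1 -HBr mulnDl mulnDr. lia.
  have : B * (j + 1) < B * n by rewrite ltn_mul2l; lia.
  have : K <= b * K by rewrite leq_pmull.
  lia.
by apply: Hgen (ltnSn _).
Qed.

Lemma Ts_nseq b k x : Ts b (nseq k x) = k * rb b x.
Proof. elim: k => [|k IH] //=; rewrite /Ts /= -/(Ts b _) IH; lia. Qed.

Lemma Tcons b x t : Ts b (x :: t) = rb b x + Ts b t.
Proof. by []. Qed.

Lemma dec1 b u : 0 < b -> 0 < Ts b u -> exists u', Ts b u' = (Ts b u).-1 /\ size u' <= size u + (b - 1).
Proof.
move=> b0; elim: u => [|e u IH] //.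
rewrite Tcons => Hp.
case: e Hp => [|[|e]] Hp.
- rewrite rb0 add0n in Hp *. have [u' [H1 H2]] := IH Hp. exists u'; split => //=; lia.
- exists u; rewrite rbS rb0 expn0 /=; split; lia.
- exists (nseq b e.+1 ++ u); rewrite Ts_cat Ts_nseq size_cat size_nseq (rbS' b e.+1) /=; split; lia.
Qed.

Lemma B2 b n : 0 < b -> 0 < n -> forall d, d < rb b n ->
  exists u, Ts b u = rb b n - 1 - d /\ size u <= b + (b - 1) * d.
Proof.
move=> b0 n0; elim=> [|d IH] Hd.
  exists (nseq b n.-1); rewrite Ts_nseq size_nseq.
  case: n n0 Hd => [|n] //= _ _. rewrite rbS'; split; lia.
have [u [H1 H2]] := IH (ltnW Hd).
have [u' [H3 H4]] := dec1 b0 (ltac:(lia) : 0 < Ts b u).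
exists u'; split; lia.
Qed.

Lemma B1 b m : 0 < b -> 0 < m -> forall t, t <= b * rb b m ->
  exists u, Ts b u = t /\ size u <= b + (b - 1) * (m - 1).
Proof.
move=> b0; elim: m => [|m IH] // _ t Ht.
case: m IH Ht => [|m] IH Ht.
  exists (nseq t 1); rewrite Ts_nseq size_nseq rbS rb0 expn0; move: Ht; rewrite rbS rb0 expn0; split; lia.
set R := rb b m.+2 in Ht *.
have R0 : 0 < R by rewrite /R rbS'; lia.
set q := t %/ R. set s := t %% R.
have Ht' : t = q * R + s by rewrite /q /s -divn_eq.
have Hs : s < R by rewrite /s ltn_pmod.
have Hq : q <= b.
  have : q * R <= b * R by lia.
  by rewrite leq_pmul2r.
have HR : R = 1 + b * rb b m.+1 by rewrite /R rbS'.
have [Hqb|Hqb] : q = b \/ q < b by lia.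
  exists (nseq b m.+2); rewrite Ts_nseq size_nseq -/R; split. 2: clear -b0; lia.
  have : s = 0 by move: Ht Ht'; rewrite Hqb; lia.
  lia.
have [u [H1 H2]] := IH erefl s (ltac:(rewrite HR in Hs; lia)).
exists (nseq q m.+2 ++ u); rewrite Ts_cat Ts_nseq size_cat size_nseq -/R; split; first lia.
have : (b - 1) * (m.+2 - 1) = (b - 1) * (m.+1 - 1) + (b - 1) by rewrite !subn1 /= mulnS addnC.
lia.
Qed.

Lemma alphaG a b n : 0 < b -> forall k, k <= n -> exists U,
  \sum_((n - k).+1 <= j < n.+1) agen a b n j = k * rb b n + a * U /\
  (b - 1) * U + k + rb b (n - k) = rb b n.
Proof.
move=> b0; elim=> [|k IH] Hk.
  exists 0; rewrite big_geq ?subn0; [split; lia | lia].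
have [U [H1 H2]] := IH (ltnW Hk).
exists (rb b (n - k.+1) + U).
have E : (n - k.+1).+1 = n - k by lia.
rewrite E big_ltn; last by lia.
rewrite H1 /agen.
have E2 : (n - k).-1 = n - k.+1 by lia.
rewrite E2; split; first by lia.
have := Brb (n - k.+1) b0.
have E3 : n - k = (n - k.+1).+1 by lia.
move: H2; rewrite E3 rbS. lia.
Qed.

Lemma alpha_form a b n i : 0 < b -> 1 <= i <= n -> exists T,
  alpha a b n i = (1 + (b - 1) * (n.+1 - i)) * rb b n + a * T /\ T + (n.+1 - i) = rb b n.
Proof.
move=> b0 /andP [i1 iN].
have [U [H1 H2]] := alphaG a b0 (ltac:(lia) : n.+1 - i <= n).
have E : (n - (n.+1 - i)).+1 = i by lia.
rewrite E in H1.
exists (rb b i.-1 + (b - 1) * U).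
rewrite /alpha -big_distrr /= H1 /agen.
have E2 : n - (n.+1 - i) = i.-1 by lia.
rewrite E2 in H2. split; lia.
Qed.

Lemma inS0 a b n : inS a b n 0.
Proof. by exists [::]. Qed.

Lemma inS_add a b n x y : inS a b n x -> inS a b n y -> inS a b n (x + y).
Proof.
move=> [s1 [H1 ->]] [s2 [H2 ->]]; exists (s1 ++ s2).
by rewrite all_cat H1 H2 map_cat sumn_cat.
Qed.

Lemma inS_gen a b n i : 0 < i -> inS a b n (agen a b n i).
Proof. by move=> Hi; exists [:: i]; rewrite /= Hi addn0. Qed.

Lemma inS_mul a b n k x : inS a b n x -> inS a b n (k * x).
Proof.
move=> Hx; elim: k => [|k IH]; first by rewrite mul0n; apply: inS0.
by rewrite mulSn; apply: inS_add.
Qed.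

Lemma agen1 a b n : agen a b n 1 = rb b n.
Proof. by rewrite /agen /= rb0 muln0 addn0. Qed.

Lemma alpha_inS a b n i : 1 <= i -> inS a b n (alpha a b n i).
Proof.
move=> Hi; rewrite /alpha; apply: inS_add; first exact: inS_gen.
rewrite -big_distrr /=; apply: inS_mul.
rewrite big_seq_cond; apply: big_ind.
- exact: inS0.
- by move=> x y; apply: inS_add.
- move=> j /andP [Hj _]; rewrite mem_index_iota in Hj; apply: inS_gen; lia.
Qed.

Lemma alpha_step a b n i : 0 < b -> 1 <= i -> i < n ->
  alpha a b n i + a = alpha a b n i.+1 + (b - 1) * rb b n.
Proof.
move=> b0 i1 iN.
have H1 : 1 <= i <= n by rewrite i1 ltnW.
have H2 : 1 <= i.+1 <= n by rewrite iN.
have [T1 [A1 E1]] := @alpha_form a b n i b0 H1.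
have [T2 [A2 E2]] := @alpha_form a b n i.+1 b0 H2.
rewrite A1 A2.
have -> : n.+1 - i = (n.+1 - i.+1).+1 by lia.
rewrite mulnS.
set k := n.+1 - i.+1 in E1 E2 *.
have -> : T2 = T1 + 1 by lia.
rewrite !mulnDl mulnDr muln1. lia.
Qed.

Lemma lemma21 (a b n : nat) :
  0 < a -> 1 < b -> 1 < n -> coprime (rb b n) a ->
  [/\ (forall i, 2 <= i <= n -> inAp a b n (alpha a b n i)),
      (a < b ^ n - 1 -> forall i, 2 <= i < n -> alpha a b n i.+1 < alpha a b n i),
      (b ^ n - 1 < a -> forall i, 2 <= i < n -> alpha a b n i < alpha a b n i.+1)
    & (forall w, inAp a b n w -> exists2 i, 2 <= i <= n & w <= alpha a b n i)].
Proof.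
move=> a0 b1 n1 cop.
have b0 : 0 < b by lia.
set r := rb b n in cop *.
have r0 : 0 < r by have := rb_ge n b0; rewrite -/r; lia.
have HBr := Brb n b0; rewrite -/r in HBr.
split.
- move=> i /andP [i2 iN]; split; first by apply: alpha_inS; apply: leq_trans i2.
  move=> [Hle [s [Hpos Hs]]].
  have Hi : 1 <= i <= n by rewrite iN andbT; apply: leq_trans i2.
  have [T [HA HT]] := @alpha_form a b n i b0 Hi.
  rewrite -/r in HA HT.
  move: Hs; rewrite agen_sum agen1 -/r HA.
  set N := size s. set T' := Ts b (map predn s).
  set k := n.+1 - i in HA HT *.
  set X := 1 + (b - 1) * k.
  move=> Hs.
  have E : N * r + a * T' + r = X * r + a * T by move: Hle; rewrite agen1 -/r HA; lia.
  have [HTT|HTT] := leqP T T'.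
    have Hd : r %| a * (T' - T).
      apply/dvdnP; exists (X - N - 1).
      rewrite mulnBr !mulnBl mul1n. lia.
    rewrite Gauss_dvdr // in Hd.
    case/dvdnP: Hd => K HK.
    have HT'' : T' = K * r + T by lia.
    have Hj : k - 1 + 2 <= n by rewrite /k; lia.
    have HT0 : T + 1 + (k - 1) = rb b n by rewrite -/r; lia.
    have := @mainA b n (k - 1) b1 Hj (map predn s) K T HT0 HT''.
    rewrite size_map -/N.
    have E2 : (N + a * K) * r = (X - 1) * r.
      rewrite mulnDl mulnBl mul1n -mulnA. move: E; rewrite HT'' mulnDr; lia.
    have E3 : N + a * K = X - 1 by apply/eqP; rewrite -(eqn_pmul2r r0) E2.
    have : K <= a * K by rewrite leq_pmull.
    have E4 : k - 1 + 1 = k by lia.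
    rewrite E4 /X. rewrite /X in E3. move=> H1 H2; clear -E3 H1 H2; clearbody N k; nia.
  have Hd : r %| a * (T - T').
    apply/dvdnP; exists (N + 1 - X).
    rewrite mulnBr !mulnBl mulnDl mul1n. lia.
  rewrite Gauss_dvdr // in Hd.
  have := dvdn_leq (ltac:(lia) : 0 < T - T') Hd. lia.
- move=> Ha i /andP [i2 iN].
  have := @alpha_step a b n i b0 (ltnW i2) iN. lia.
- move=> Ha i /andP [i2 iN].
  have := @alpha_step a b n i b0 (ltnW i2) iN. lia.
- move=> w [[s [Hpos Hs]] Hn].
  move: Hs; rewrite agen_sum.
  set N := size s. set T := Ts b (map predn s) => Hw.
  set t := T %% r. set K := T %/ r.
  have HTK : T = K * r + t by rewrite /K /t -divn_eq.
  have Htr : t < r by rewrite /t ltn_pmod.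
  set d := minn (r - 1 - t) (n - 2).
  have Hd1 : d <= r - 1 - t by rewrite /d geq_minl.
  have Hd2 : d <= n - 2 by rewrite /d geq_minr.
  have [u [Hu1 Hu2]] : exists u, Ts b u = t /\ size u <= b + (b - 1) * d.
    have [Hc|Hc] := leqP (r - 1 - t) (n - 2).
      have Hdd : d = r - 1 - t by rewrite /d; apply/minn_idPl.
      have Hdr : d < rb b n by rewrite -/r; lia.
      have [u [U1 U2]] := B2 b0 (ltnW n1) Hdr.
      exists u; rewrite U1 -/r; split; [lia | exact U2].
    have Hdd : d = n - 2 by rewrite /d; apply/minn_idPr; lia.
    have Ht2 : t <= b * rb b (n - 1).
      have : rb b n = 1 + b * rb b (n - 1) by rewrite -rbS'; congr rb; lia.
      rewrite -/r; lia.
    have [u [U1 U2]] := B1 b0 (ltac:(lia) : 0 < n - 1) Ht2.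
    exists u; split => //; rewrite Hdd; have -> : n - 2 = n - 1 - 1 by lia. done.
  set i := n - d.
  have Hi : 1 <= i <= n by apply/andP; split; rewrite /i; lia.
  have [Ti [HA HTi]] := @alpha_form a b n i b0 Hi.
  rewrite -/r in HA HTi.
  have Hk : n.+1 - i = d.+1 by rewrite /i; lia.
  rewrite Hk in HA HTi.
  exists i; first by apply/andP; split; rewrite /i; lia.
  set v := size u * r + a * t.
  have Hv : v <= alpha a b n i.
    rewrite HA /v; apply: leq_add.
      apply: leq_mul => //. rewrite mulnS. lia.
    apply: leq_mul => //; lia.
  apply: leq_trans Hv.
  set M := N + a * K.
  have HwM : w = M * r + a * t by rewrite Hw HTK /M -/r mulnDl mulnDr mulnA addnA.
  rewrite leqNgt; apply/negP => Hlt.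
  have HuM : size u < M.
    rewrite ltnNge; apply/negP => HMu.
    have : M * r <= size u * r by rewrite leq_mul2r HMu orbT.
    move: Hlt; rewrite HwM /v; lia.
  apply: Hn; split.
    rewrite agen1 -/r HwM.
    have : r <= M * r by rewrite leq_pmull //; lia.
    lia.
  set c := M - size u - 1.
  exists (nseq c 1 ++ map succn u); split.
    rewrite all_cat all_nseq orbT /=; apply/allP => x /mapP [y _ ->]; done.
  rewrite agen_sum agen1 -/r size_cat size_nseq size_map map_cat Ts_cat map_nseq Ts_nseq /= rb0 muln0 add0n.
  have -> : [seq x.-1 | x <- map succn u] = u by clear -u; elim: u => //= x u ->.
  rewrite Hu1 HwM.
  have -> : M = c + size u + 1 by rewrite /c; lia.
  rewrite !mulnDl mul1n. lia.
Qed.
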